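(* Let $\lambda\neq0$. For every positive integer $N$ and every integer $k\ge 0$, $$Bl_{k+N}(\lambda)=(-1)^N\lambda\sum_{i=1}^{N+1}a_{i-1}(N;\lambda)\sum_{l=0}^{k}\binom{k}{l}(-1)^l(N+l-1)_l\,Bl^{(i)}_{k-l}(\lambda).$$
   Context: $(x)_n=x(x-1)\cdots(x-n+1)$, $(x)_0=1$. The Boole numbers $Bl_n(\lambda)$ and higher-order Boole numbers $Bl_n^{(r)}(\lambda)$ ($r\in\mathbb{N}$) are defined by $\frac{1}{(1+t)^\lambda+1}=\sum_{n\ge0}Bl_n(\lambda)\frac{t^n}{n!}$ and $\left(\frac{1}{(1+t)^\lambda+1}\right)^r=\sum_{n\ge0}Bl_n^{(r)}(\lambda)\frac{t^n}{n!}$. The numbers $a_i(N;\lambda)$ are defined recursively by $a_0(0;\lambda)=1/\lambda$ and, for $N\ge0$: $a_0(N+1;\lambda)=(N+\lambda)a_0(N;\lambda)$, $a_{N+1}(N+1;\lambda)=-(N+1)\lambda a_N(N;\lambda)$, $a_k(N+1;\lambda)=-k\lambda a_{k-1}(N;\lambda)+(N+(k+1)\lambda)a_k(N;\lambda)$ for $1\le k\le N$; they are the coefficients for which $\left(\frac{d}{dt}\right)^N F=\frac{(-1)^N\lambda}{(1+t)^N}\sum_{i=1}^{N+1}a_{i-1}(N;\lambda)F^i$ with $F=\frac{1}{(1+t)^\lambda+1}$. *)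

(* Defs.v *)
(* Formal (exponential) power series over a field R of
   characteristic 0 (a numFieldType), represented by their EGF coefficient
   sequences nat -> R: a series sum_n f n t^n/n! is represented by f. *)
From HB Require Import structures.
From mathcomp Require Import all_boot all_order all_algebra.
Set Implicit Arguments. Unset Strict Implicit. Unset Printing Implicit Defensive.
Import Order.TTheory GRing.Theory Num.Theory.
Local Open Scope ring_scope.

Definition falling {R : ringType} (x : R) (n : nat) : R :=
  \prod_(i < n) (x - i%:R).

(* product of EGF coefficient sequences: coefficient sequence of the
   product of sum f_n t^n/n! and sum g_n t^n/n! *)
Definition egf_mul {R : ringType} (f g : nat -> R) : nat -> R :=
  fun n => \sum_(j < n.+1) 'C(n, j)%:R * f j * g (n - j)%N.

Definition egf_one {R : ringType} : nat -> R := fun n => (n == 0%N)%:R.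

Fixpoint egf_pow {R : ringType} (f : nat -> R) (r : nat) : nat -> R :=
  match r with
  | 0 => egf_one
  | r'.+1 => egf_mul f (egf_pow f r')
  end.

(* EGF coefficients of (1+t)^lambda + 1 : (1+t)^lambda = sum (lambda)_n t^n/n! *)
Definition boole_den {R : ringType} (lam : R) : nat -> R :=
  fun n => falling lam n + (n == 0%N)%:R.

(* The reciprocal of boole_den lam (constant term 2), computed by the
   standard power-series inversion recursion: the list of the first n+1
   EGF coefficients of 1/((1+t)^lambda+1). *)
Fixpoint boole_seq {R : numFieldType} (lam : R) (n : nat) : seq R :=
  match n with
  | 0 => [:: 2^-1]
  | n'.+1 =>
      let s := boole_seq lam n' in
      rcons s (- (\sum_(j < n'.+1) 'C(n'.+1, j)%:R * s`_j
                     * boole_den lam (n'.+1 - j)%N) / 2)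
  end.

Definition Bl {R : numFieldType} (lam : R) (n : nat) : R := (boole_seq lam n)`_n.

Definition Blr {R : numFieldType} (r : nat) (lam : R) (n : nat) : R :=
  egf_pow (Bl lam) r n.

(* a_k(N; lambda), as a function of N returning k |-> a_k(N;lambda)
   (value 0 outside 0 <= k <= N, never used). *)
Fixpoint acoef {R : numFieldType} (lam : R) (N : nat) : nat -> R :=
  match N with
  | 0 => fun k => if k == 0%N then lam^-1 else 0
  | N'.+1 =>
      let p := acoef lam N' in
      fun k =>
        if k == 0%N then (N'%:R + lam) * p 0%N
        else if k == N'.+1 then - (N'.+1%:R * lam) * p N'
        else if (k <= N')%N then
          - (k%:R * lam) * p k.-1 + (N'%:R + k.+1%:R * lam) * p k
        else 0
  end.

Lemma boole_inv_check {R : numFieldType} (lam : R) :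
  Bl lam 0 = 2^-1.
Proof. by []. Qed.

(* Main.v *)
Require Import Defs.
From HB Require Import structures.
From mathcomp Require Import all_boot all_order all_algebra.
From mathcomp Require Import boolp.
From mathcomp Require Import ring lra zify.
Set Implicit Arguments. Unset Strict Implicit. Unset Printing Implicit Defensive.
Import Order.TTheory GRing.Theory Num.Theory.
Local Open Scope ring_scope.

Section EGF.
Variable R : numFieldType.

Definition egf := nat -> R.
HB.instance Definition _ := gen_eqMixin egf.
HB.instance Definition _ := gen_choiceMixin egf.

Definition eadd (f g : egf) : egf := fun n => f n + g n.
Definition eopp (f : egf) : egf := fun n => - f n.
Definition ezero : egf := fun _ => 0.

Lemma eaddA : associative eadd.
Proof. by move=> f g h; apply: funext => n; rewrite /eadd addrA. Qed.
Lemma eaddC : commutative eadd.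
Proof. by move=> f g; apply: funext => n; rewrite /eadd addrC. Qed.
Lemma eadd0 : left_id ezero eadd.
Proof. by move=> f; apply: funext => n; rewrite /eadd add0r. Qed.
Lemma eaddN : left_inverse ezero eopp eadd.
Proof. by move=> f; apply: funext => n; rewrite /eadd /eopp addNr. Qed.

HB.instance Definition _ := GRing.isZmodule.Build egf eaddA eaddC eadd0 eaddN.

Definition sc (f : egf) : egf := fun i => f i / i`!%:R.
Definition conv (a b : egf) : egf := fun n => \sum_(j < n.+1) a j * b (n - j)%N.
Definition pol (m : nat) (a : egf) : {poly R} := \poly_(i < m) a i.

Lemma fact_neq0 n : (n`!%:R : R) != 0.
Proof. by rewrite pnatr_eq0 -lt0n fact_gt0. Qed.

Lemma conv_pol m a b n : (n < m)%N -> conv a b n = (pol m a * pol m b)`_n.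
Proof.
move=> nm; rewrite coefM /conv; apply: eq_bigr => j _.
rewrite /pol !coef_poly (leq_ltn_trans _ nm) ?leq_ord //.
by rewrite (leq_ltn_trans _ nm) ?leq_subr.
Qed.

Lemma coefM_eq (r p q : {poly R}) m n : (n < m)%N ->
  (forall i, (i < m)%N -> p`_i = q`_i) -> (r * p)`_n = (r * q)`_n.
Proof.
move=> nm H; rewrite !coefM; apply: eq_bigr => j _; rewrite H //.
exact: leq_ltn_trans (leq_subr _ _) nm.
Qed.

Lemma convC a b : conv a b = conv b a.
Proof. by apply: funext => n; rewrite !(conv_pol a b (ltnSn n)) (conv_pol b a (ltnSn n)) mulrC. Qed.

Lemma pol_conv a b m i : (i < m)%N -> (pol m (conv a b))`_i = (pol m a * pol m b)`_i.
Proof. by move=> im; rewrite /pol coef_poly im -/(pol m a) (conv_pol _ _ im). Qed.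

Lemma convA a b c : conv a (conv b c) = conv (conv a b) c.
Proof.
apply: funext => n; have nm := ltnSn n.
rewrite (conv_pol _ _ nm) (conv_pol (conv a b) _ nm).
rewrite (@coefM_eq (pol n.+1 a) _ (pol n.+1 b * pol n.+1 c) _ _ nm); last first.
  by move=> i im; apply: pol_conv.
rewrite [pol n.+1 (conv a b) * _]mulrC.
rewrite (@coefM_eq (pol n.+1 c) _ (pol n.+1 a * pol n.+1 b) _ _ nm); last first.
  by move=> i im; apply: pol_conv.
by rewrite mulrA [pol n.+1 c * _]mulrC.
Qed.

Lemma egf_mul_sc (f g : egf) n :
  egf_mul f g n = n`!%:R * conv (sc f) (sc g) n.
Proof.
rewrite /egf_mul /conv mulr_sumr; apply: eq_bigr => j _.
have jn : (j <= n)%N by rewrite -ltnS.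
rewrite /sc -(bin_fact jn) !natrM; field.
by rewrite !fact_neq0.
Qed.

Lemma sc_inj f g : sc f = sc g -> f = g.
Proof.
move=> H; apply: funext => n; have := congr1 (fun h => h n) H; rewrite /sc => H'.
by rewrite -(divfK (fact_neq0 n) (f n)) H' divfK ?fact_neq0.
Qed.

Lemma sc_mul f g : sc (egf_mul f g) = conv (sc f) (sc g).
Proof.
apply: funext => n; rewrite /sc egf_mul_sc mulrC mulKf ?fact_neq0 //.
Qed.

Lemma emulA : associative (@egf_mul R).
Proof. by move=> f g h; apply: sc_inj; rewrite !sc_mul convA. Qed.
Lemma emulC : commutative (@egf_mul R).
Proof. by move=> f g; apply: sc_inj; rewrite !sc_mul convC. Qed.
Lemma emul1 : left_id (@egf_one R) (@egf_mul R).
Proof.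
move=> f; apply: funext => n; rewrite /egf_mul big_ord_recl /= bin0 subn0 /egf_one eqxx.
rewrite big1 ?addr0 ?mul1r. all: try (move=> j _; rewrite mulr0 mul0r). all: by [].
Qed.
Lemma emulDl : left_distributive (@egf_mul R) eadd.
Proof.
move=> f g h; apply: funext => n; rewrite /egf_mul /eadd -big_split /=.
by apply: eq_bigr => j _; rewrite mulrDr mulrDl.
Qed.
Lemma eone_neq0 : (@egf_one R : egf) != ezero.
Proof.
apply/eqP => /(congr1 (fun h => h 0%N)); rewrite /egf_one /ezero /= => /eqP.
by rewrite oner_eq0.
Qed.

HB.instance Definition _ := GRing.Zmodule_isComNzRing.Build egf emulA emulC emul1 emulDl eone_neq0.

Lemma addeE (f g : egf) n : (f + g) n = f n + g n. Proof. by []. Qed.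
Lemma mulE (f g : egf) : f * g = egf_mul f g. Proof. by []. Qed.
Lemma oneE : (1 : egf) = egf_one. Proof. by []. Qed.
Lemma zeroeE n : (0 : egf) n = 0. Proof. by []. Qed.
Lemma oppeE (f : egf) n : (- f) n = - f n. Proof. by []. Qed.
Lemma suberE (f g : egf) n : (f - g) n = f n - g n. Proof. by []. Qed.

Definition D (f : egf) : egf := fun n => f n.+1.
Definition cst (c : R) : egf := fun n => c * egf_one n.
Definition P (a : R) : egf := fun n => falling a n.

Lemma cstM c (g : egf) n : (cst c * g) n = c * g n.
Proof.
rewrite mulE /egf_mul big_ord_recl /= bin0 subn0 /cst /egf_one eqxx mulr1 mul1r.
rewrite big1 ?addr0 //; move=> j _; by rewrite /bump add1n /= !mulr0 mul0r.
Qed.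

Lemma cst_add a b : cst (a + b) = cst a + cst b.
Proof. by apply: funext => n; rewrite addeE /cst mulrDl. Qed.
Lemma cst_mul a b : cst (a * b) = cst a * cst b.
Proof. by apply: funext => n; rewrite cstM /cst mulrA. Qed.
Lemma cst_opp a : cst (- a) = - cst a.
Proof. by apply: funext => n; rewrite oppeE /cst mulNr. Qed.
Lemma cst1 : cst 1 = 1.
Proof. by apply: funext => n; rewrite /cst mul1r. Qed.
Lemma cst0 : cst 0 = 0.
Proof. by apply: funext => n; rewrite /cst mul0r. Qed.
Lemma cst_nat k : cst k%:R = k%:R.
Proof. by elim: k => [|k IH]; rewrite ?cst0 // -addn1 !natrD cst_add IH cst1. Qed.

Lemma D_add f g : D (f + g) = D f + D g. Proof. by []. Qed.
Lemma D_opp f : D (- f) = - D f. Proof. by []. Qed.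
Lemma D_0 : D 0 = 0. Proof. by []. Qed.
Lemma D_1 : D 1 = 0.
Proof. by apply: funext => n; rewrite /D oneE /egf_one. Qed.
Lemma D_cst c : D (cst c) = 0.
Proof. by apply: funext => n; rewrite /D /cst /egf_one /= mulr0. Qed.
Lemma D_sum (I : Type) (r : seq I) (Pr : pred I) (G : I -> egf) :
  D (\sum_(i <- r | Pr i) G i) = \sum_(i <- r | Pr i) D (G i).
Proof. exact: (big_morph D D_add D_0). Qed.

Lemma D_mul f g : D (f * g) = D f * g + f * D g.
Proof.
apply: funext => n; rewrite addeE !mulE /egf_mul /D.
rewrite big_ord_recl /= bin0 subn0 mul1r.
have -> : \sum_(i < n.+1) 'C(n.+1, bump 0 i)%:R * f (bump 0 i) * g (n.+1 - bump 0 i)%N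
   = \sum_(i < n.+1) 'C(n, i.+1)%:R * f i.+1 * g (n - i)%N
   + \sum_(i < n.+1) 'C(n, i)%:R * f i.+1 * g (n - i)%N.
  rewrite -big_split /=; apply: eq_bigr => i _.
  by rewrite /bump /= add1n binS subSS natrD !mulrDl addrC.
rewrite addrA [X in _ = X]addrC; congr (_ + _).
rewrite [RHS]big_ord_recl big_ord_recr /= bin_small // !mul0r addr0 bin0 subn0 mul1r.
congr (_ + _); apply: eq_bigr => i _; rewrite /bump /= add1n; congr (_ * _ * g _).
by rewrite subnSK.
Qed.

Lemma natE k (g : egf) n : (k%:R * g) n = k%:R * g n.
Proof. by rewrite -cst_nat cstM. Qed.

Lemma sum_coef (I : Type) (r : seq I) (Pr : pred I) (G : I -> egf) n :
  (\sum_(i <- r | Pr i) G i) n = \sum_(i <- r | Pr i) G i n.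
Proof. exact: (big_morph (fun f : egf => f n) (fun f g => addeE f g n) (zeroeE n)). Qed.

Lemma D_exp f i : D (f ^+ i.+1) = i.+1%:R * f ^+ i * D f.
Proof.
elim: i => [|i IH]; first by rewrite expr1 expr0 mulr1 mul1r.
rewrite exprS D_mul IH exprS; ring.
Qed.

Lemma egf_powE (f : egf) i : egf_pow f i = f ^+ i.
Proof. by elim: i => [|i IH] //=; rewrite exprS -IH. Qed.

Lemma falling_S (a : R) n : falling a n.+1 = falling a n * (a - n%:R).
Proof. by rewrite /falling big_ord_recr. Qed.
Lemma falling0 (a : R) : falling a 0 = 1.
Proof. by rewrite /falling big_ord0. Qed.

Lemma falling_nat0 m n : (m < n)%N -> falling (m%:R : R) n = 0.
Proof.
by move=> mn; rewrite /falling (bigD1 (Ordinal mn)) //= subrr mul0r.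
Qed.

Lemma P1E (g : egf) n : (P 1 * g) n.+1 = g n.+1 + n.+1%:R * g n.
Proof.
rewrite mulE /egf_mul big_ord_recl big_ord_recl /= /P bin0 bin1 subn0 falling0.
rewrite falling_S falling0 subr0 !mul1r mulr1 big1 ?addr0; last first.
  by move=> j _; rewrite (falling_nat0 (m:=1)) // mulr0 mul0r.
by rewrite /bump /= subSS subn0.
Qed.
Lemma P1E0 (g : egf) : (P 1 * g) 0 = g 0.
Proof. by rewrite mulE /egf_mul big_ord_recl big_ord0 /= /P falling0 addr0 !mul1r. Qed.

Lemma T_DP a : P 1 * D (P a) = cst a * P a.
Proof.
apply: funext => -[|n]; rewrite cstM ?P1E0 ?P1E /D /P.
  by rewrite falling_S falling0 subr0 mul1r mulr1.
rewrite falling_S; ring.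
Qed.

Lemma P_uniq (g : egf) c : g 0 = 1 -> P 1 * D g = cst c * g -> g = P c.
Proof.
move=> g0 H; apply: funext; elim => [|n IH]; first by rewrite g0 /P falling0.
have := congr1 (fun h => h n) H; case: n IH => [|n] IH.
  by rewrite P1E0 cstM /D IH => ->; rewrite /P falling_S !falling0 subr0 mul1r mulr1.
rewrite P1E cstM /D IH /P => H1.
have -> : g n.+2 = c * falling c n.+1 - n.+1%:R * falling c n.+1.
  by rewrite -H1 addrK.
by rewrite [falling c n.+2]falling_S; ring.
Qed.

Lemma DP1 : D (P 1) = 1.
Proof.
apply: funext => -[|n]; rewrite /D /P oneE /egf_one /=.
  by rewrite falling_S falling0 subr0 mul1r.
by rewrite (falling_nat0 (m:=1)).
Qed.

Lemma P_add a b : P a * P b = P (a + b).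
Proof.
apply: P_uniq.
  by rewrite mulE /egf_mul big_ord1 /= /P bin0 subn0 !falling0 !mulr1.
rewrite D_mul mulrDr mulrA T_DP mulrCA T_DP cst_add; ring.
Qed.

Lemma P0 : P 0 = 1.
Proof.
apply: funext => -[|n]; rewrite /P oneE /egf_one /= ?falling0 //.
by rewrite (falling_nat0 (m:=0)).
Qed.

Lemma P_nat N : P N%:R = P 1 ^+ N.
Proof.
elim: N => [|N IH]; first by rewrite P0 expr0.
by rewrite exprS -IH P_add -natr1 addrC.
Qed.

Lemma T_DTN N : P 1 * D (P 1 ^+ N) = N%:R * P 1 ^+ N.
Proof.
elim: N => [|N IH]; first by rewrite expr0 D_1 mulr0 mul0r.
rewrite exprS D_mul DP1 mulrDr mulrCA IH; rewrite -natr1; ring.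
Qed.

Section Boole.
Variable lam : R.

Lemma size_bs n : size (boole_seq lam n) = n.+1.
Proof. by elim: n => [|n IH] //=; rewrite size_rcons IH. Qed.

Lemma bs_prefix n j : (j <= n)%N -> (boole_seq lam n)`_j = Bl lam j.
Proof.
elim: n => [|n IH]; first by rewrite leqn0 => /eqP ->.
rewrite leq_eqVlt => /orP [/eqP -> //|jn].
by rewrite /= nth_rcons size_bs jn IH.
Qed.

Lemma Bl_S n : Bl lam n.+1 =
  - (\sum_(j < n.+1) 'C(n.+1, j)%:R * Bl lam j * boole_den lam (n.+1 - j)%N) / 2.
Proof.
rewrite {1}/Bl /= nth_rcons size_bs ltnn eqxx; congr (- _ / _).
by apply: eq_bigr => j _; rewrite bs_prefix // -ltnS.
Qed.

Definition F : egf := Bl lam.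

Lemma two_neq0 : (2 : R) != 0.
Proof. by rewrite pnatr_eq0. Qed.

Lemma F_den : F * (P lam + 1) = 1.
Proof.
have den : (P lam + 1 : egf) = boole_den lam by [].
rewrite den; apply: funext => -[|n]; rewrite mulE /egf_mul oneE /egf_one /=.
  rewrite big_ord1 /= /F /Bl /= /boole_den falling0 bin0 mul1r.
  by rewrite -[1 + 1]/(2%:R : R) mulVf ?two_neq0.
rewrite big_ord_recr /= binn subnn /F Bl_S /boole_den falling0.
rewrite -[1 + 1]/(2%:R : R) mul1r divfK ?two_neq0 //.
by rewrite subrr.
Qed.

Lemma T_DF : P 1 * D F = cst lam * (F ^+ 2 - F).
Proof.
have h1 := F_den.
have h2 : D F * (P lam + 1) + F * D (P lam) = 0.
  by rewrite -[D (P lam)]addr0 -D_1 -D_add -D_mul h1 D_1.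
have h3 := T_DP lam.
have -> : P 1 * D F = P 1 * D F * (1 - F * (P lam + 1))
   + F * P 1 * (D F * (P lam + 1) + F * D (P lam))
   - F ^+ 2 * (P 1 * D (P lam) - cst lam * P lam)
   - cst lam * F * (F * (P lam + 1)) + cst lam * F ^+ 2 by ring.
rewrite h1 h2 h3 !subrr; ring.
Qed.

Lemma T_DFi i : P 1 * D (F ^+ i.+1) = cst lam * i.+1%:R * (F ^+ i.+2 - F ^+ i.+1).
Proof.
rewrite D_exp; transitivity (i.+1%:R * F ^+ i * (P 1 * D F)); first ring.
rewrite T_DF !exprS; ring.
Qed.

Lemma acoef_big N k : (N < k)%N -> acoef lam N k = 0.
Proof.
elim: N k => [|N IH] k /=; first by case: k.
move=> Nk; rewrite (gtn_eqF (leq_trans _ Nk)) // (gtn_eqF Nk).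
by rewrite leqNgt (ltnW Nk).
Qed.

Lemma acoefS N k : (k <= N.+1)%N -> acoef lam N.+1 k =
  - (k%:R * lam) * acoef lam N k.-1 + (N%:R + k.+1%:R * lam) * acoef lam N k.
Proof.
move=> kN /=; case: k kN => [|k] kN /=; first by rewrite mul0r oppr0 mul0r add0r mul1r.
case: eqP => [[->]|/eqP kN1].
  by rewrite (acoef_big (k:=N.+1)) // mulr0 addr0.
move: kN1; rewrite eqSS => kN1.
have -> : (k < N)%N by rewrite ltn_neqAle kN1 -ltnS kN.
by [].
Qed.

Lemma L_step N (X : egf) : P 1 ^+ N.+1 * D X =
  P 1 * D (P 1 ^+ N * X) - N%:R * (P 1 ^+ N * X).
Proof.
rewrite D_mul mulrDr mulrA T_DTN exprS; ring.
Qed.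

Lemma D_lin (c : R) n (a : nat -> R) :
  P 1 * D (cst c * \sum_(i < n) cst (a i) * F ^+ i.+1) =
  cst c * \sum_(i < n) cst (a i) * (cst lam * i.+1%:R * (F ^+ i.+2 - F ^+ i.+1)).
Proof.
rewrite D_mul D_cst mul0r add0r D_sum mulrCA; congr (_ * _).
rewrite mulr_sumr; apply: eq_bigr => i _.
by rewrite D_mul D_cst mul0r add0r -T_DFi; ring.
Qed.

Lemma lam_inv : lam != 0 -> cst lam * cst (lam^-1) = 1.
Proof. by move=> l0; rewrite -cst_mul mulfV // cst1. Qed.

Lemma main_identity N : lam != 0 ->
  P 1 ^+ N * iter N D F =
  cst ((-1) ^+ N * lam) * \sum_(i < N.+1) cst (acoef lam N i) * F ^+ i.+1.
Proof.
move=> l0; elim: N => [|N IH].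
  by rewrite !expr0 !mul1r big_ord1 /= expr1 mulrA lam_inv // mul1r.
rewrite iterS L_step IH D_lin.
rewrite exprS mulN1r mulNr cst_opp mulNr.
set c := cst ((-1) ^+ N * lam).
rewrite mulrCA -mulrBr -mulrN; congr (c * _).
apply/eqP; rewrite eq_sym eqr_oppLR; apply/eqP.
transitivity (\sum_(i < N.+2) (cst (- (i%:R * lam) * acoef lam N i.-1) * F ^+ i.+1)
  + \sum_(i < N.+2) cst ((N%:R + i.+1%:R * lam) * acoef lam N i) * F ^+ i.+1).
  rewrite -big_split; apply: eq_bigr => i _.
  by rewrite acoefS ?cst_add ?mulrDl // -ltnS.
rewrite big_ord_recl [X in _ + X = _]big_ord_recr /= (acoef_big (k:=N.+1)) //.
rewrite !(mulr0, mul0r, oppr0, cst0, addr0, add0r).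
rewrite opprB mulr_sumr -sumrB -big_split; apply: eq_bigr => i _ /=.
rewrite /bump /= add1n add0n !(cst_mul, cst_opp, cst_add, cst_nat) !exprS; ring.
Qed.
End Boole.
Lemma iterD N (f : egf) n : iter N D f n = f (n + N)%N.
Proof.
elim: N n => [|N IH] n /=; first by rewrite addn0.
by rewrite /D IH addSnnS.
Qed.

Lemma falling_neg N l : (0 < N)%N ->
  falling (- (N%:R : R)) l = (-1) ^+ l * falling ((N + l).-1%:R) l.
Proof.
move=> N0; rewrite /falling [in RHS](reindex_inj rev_ord_inj) /=.
have -> : (-1 : R) ^+ l = \prod_(i < l) (-1).
  by rewrite -(big_mkord xpredT (fun _ => -1)) prodr_const_nat subn0.
rewrite -big_split; apply: eq_bigr => i _ /=.
have il := ltn_ord i.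
rewrite -natrB; last by lia.
rewrite mulN1r -opprD -natrD; congr (- _%:R); lia.
Qed.

End EGF.

Unset Implicit Arguments.
Theorem theorem3 (R : numFieldType) (lam : R) (N k : nat) :
  lam != 0 -> (0 < N)%N ->
  Bl lam (k + N) =
    (-1) ^+ N * lam *
    \sum_(1 <= i < N.+2)
      acoef lam N i.-1 *
      \sum_(0 <= l < k.+1)
        'C(k, l)%:R * (-1) ^+ l * falling ((N + l).-1%:R : R) l
        * Blr i lam (k - l)%N.
Proof.
move=> l0 N0.
have -> : Bl lam (k + N) = iter N (@D R) (F lam) k by rewrite iterD.
have H1 : P (- (N%:R : R)) * P 1 ^+ N = 1 by rewrite -P_nat P_add addNr P0.
rewrite big_add1 /= !big_mkord.
rewrite -[iter N _ _]mul1r -H1 -mulrA main_identity // mulE /egf_mul.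
rewrite [RHS]mulr_sumr.
under [RHS]eq_bigr => i _ do rewrite mulr_sumr mulr_sumr.
rewrite [RHS]exchange_big /= big_mkord; apply: eq_bigr => l _.
rewrite cstM sum_coef mulr_sumr mulr_sumr; apply: eq_bigr => i _.
rewrite cstM /Blr egf_powE /P falling_neg // /F; ring.
Qed.
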